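(* Let $D\subseteq\mathbb{R}$, let $g:D\to\mathbb{R}$ be ordinal decreasing on $D$, let $a=\sup_{x\in D}(-g(x))$, and let $f$ be a real function that is ordinal decreasing up to $a$. Then the function $x\mapsto f(-g(x))$ is ordinal decreasing on $D$.
   Context: For a function $h$ defined on a set $E\subseteq\mathbb{R}$, a strictly decreasing sequence $x_1>x_2>\cdots$ in $E$ is $h$-bad if $h(x_1)>h(x_2)>\cdots$; $h$ is ordinal decreasing on $E$ if there is no infinite $h$-bad sequence in $E$. A function $f$ is ordinal decreasing up to $a$ if it is defined on $(-\infty,a]$ and is ordinal decreasing on $(-\infty,a]$. *)

(* Defs.v *)
From Stdlib Require Import Reals.
From Coquelicot Require Export Rbar Lub.
Export Stdlib.Reals.Reals.
Open Scope R_scope.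

Definition h_bad (E : R -> Prop) (h : R -> R) (x : nat -> R) : Prop :=
  (forall n, E (x n)) /\
  (forall n, x (S n) < x n) /\
  (forall n, h (x (S n)) < h (x n)).

Definition ordinal_decreasing (E : R -> Prop) (h : R -> R) : Prop :=
  ~ (exists x : nat -> R, h_bad E h x).

Definition ordinal_decreasing_up_to (f : R -> R) (a : Rbar) : Prop :=
  ordinal_decreasing (fun y => Rbar_le (Finite y) a) f.

(* Main.v *)
Require Import Defs.
From Stdlib Require Import Reals.
From Coquelicot Require Import Rbar Lub.
From Stdlib Require Import Classical ClassicalEpsilon Lia Lra.
Open Scope R_scope.

Lemma dec_lt (v : nat -> R) : (forall n, v (S n) < v n) ->
  forall n m, (n < m)%nat -> v m < v n.
Proof.
  intros H n m Hnm; induction Hnm.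
  - apply H.
  - specialize (H m); lra.
Qed.

Lemma inc_lt (phi : nat -> nat) : (forall n, (phi n < phi (S n))%nat) ->
  forall n m, (n < m)%nat -> (phi n < phi m)%nat.
Proof.
  intros H n m Hnm; induction Hnm.
  - apply H.
  - specialize (H m); lia.
Qed.

Lemma mono_sub (u : nat -> R) (Hd : forall n m, (n < m)%nat -> u n <> u m) :
  exists phi : nat -> nat, (forall n, (phi n < phi (S n))%nat) /\
   ((forall n, u (phi (S n)) < u (phi n)) \/ (forall n, u (phi n) < u (phi (S n)))).
Proof.
  set (P := fun n => forall m, (n < m)%nat -> u m < u n).
  destruct (classic (forall N, exists n, (N < n)%nat /\ P n)) as [HA|HB].
  - assert (Hn : forall N, {n | (N < n)%nat /\ P n}).
    { intro N; apply constructive_indefinite_description; apply HA. }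
    set (next := fun N => proj1_sig (Hn N)).
    assert (Hnext : forall N, (N < next N)%nat /\ P (next N)).
    { intro N; unfold next; destruct (Hn N); simpl; auto. }
    exists (fix phi k := match k with O => next O | S k => next (phi k) end).
    split.
    + intro n; simpl; apply Hnext.
    + left; intro n; simpl.
      destruct n; simpl; apply (proj2 (Hnext _)); apply Hnext.
  - apply not_all_ex_not in HB; destruct HB as [N HN].
    assert (HN' : forall n, (N < n)%nat -> ~ P n).
    { intros n Hn HP; apply HN; exists n; auto. }
    assert (Hex : forall n, exists m, (n < m)%nat /\ ((N < n)%nat -> u n < u m)).
    { intro n. destruct (classic ((N < n)%nat)) as [Hl|Hl].
      - specialize (HN' n Hl). unfold P in HN'.
        apply not_all_ex_not in HN'; destruct HN' as [m Hm].
        apply imply_to_and in Hm; destruct Hm as [Hm1 Hm2].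
        exists m; split; auto; intros _.
        specialize (Hd n m Hm1). lra.
      - exists (S n); split; [lia| intro; contradiction]. }
    assert (Hn : forall n, {m | (n < m)%nat /\ ((N < n)%nat -> u n < u m)}).
    { intro n; apply constructive_indefinite_description; apply Hex. }
    set (next := fun n => proj1_sig (Hn n)).
    assert (Hnext : forall n, (n < next n)%nat /\ ((N < n)%nat -> u n < u (next n))).
    { intro n; unfold next; destruct (Hn n); simpl; auto. }
    set (phi := fix phi k := match k with O => S N | S k => next (phi k) end).
    assert (Hge : forall k, (N < phi k)%nat).
    { induction k; simpl; [lia|]. pose proof (proj1 (Hnext (phi k))). fold phi. lia. }
    exists phi; split.
    + intro n; simpl; apply Hnext.
    + right; intro n. change (phi (S n)) with (next (phi n)).
      apply Hnext, Hge.
Qed.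

Theorem lemma3 (D : R -> Prop) (g f : R -> R) (a : Rbar)
  (Hg : ordinal_decreasing D g)
  (Ha : is_lub_Rbar (fun y => exists x, D x /\ y = - g x) a)
  (Hf : ordinal_decreasing_up_to f a) :
  ordinal_decreasing D (fun x => f (- g x)).
Proof.
  intros [x [HD [Hx Hfx]]].
  assert (Hxl := dec_lt x Hx).
  assert (Hfl := dec_lt (fun n => f (- g (x n))) Hfx).
  assert (Hd : forall n m, (n < m)%nat -> g (x n) <> g (x m)).
  { intros n m Hnm E. specialize (Hfl n m Hnm). simpl in Hfl. rewrite E in Hfl. lra. }
  destruct (mono_sub (fun n => g (x n)) Hd) as [phi [Hphi [Hdec|Hinc]]].
  - apply Hg. exists (fun n => x (phi n)). split; [|split].
    + intro n; apply HD.
    + intro n; apply Hxl, Hphi.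
    + exact Hdec.
  - apply Hf. exists (fun n => - g (x (phi n))). split; [|split].
    + intro n. apply (proj1 Ha). exists (x (phi n)); split; auto.
    + intro n; specialize (Hinc n); simpl in Hinc; lra.
    + intro n; apply (Hfl (phi n) (phi (S n))), Hphi.
Qed.
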